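(* Let $(\overline{\mathbf{v}}^n,\overline{\boldsymbol{\rho}}^n)_{n\in\mathbb{N}}$ be a supersolution and $(\underline{\mathbf{v}}^n,\underline{\boldsymbol{\rho}}^n)_{n\in\mathbb{N}}$ a subsolution of the iterative scheme described in the context. Assume that $\underline{v}^0_j(t,x)\le\overline{v}^0_j(t,x)$ and $\underline{\rho}^0_j(t)\le\overline{\rho}^0_j(t)$ for all $t\ge0$, $x\in[0,1]$, $j\in\mathbb{Z}$, and that for all $n\ge1$, $\underline{v}^n_j(0,x)\le\overline{v}^n_j(0,x)$ and $\underline{\rho}^n_j(0)\le\overline{\rho}^n_j(0)$ for $x\in[0,1]$, $j\in\mathbb{Z}$. Then for all $t>0$, $n\ge1$, $j\in\mathbb{Z}$: $\underline{v}^n_j(t,x)\le\overline{v}^n_j(t,x)$ for $x\in[0,1]$ and $\underline{\rho}^n_j(t)\le\overline{\rho}^n_j(t)$.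
   Context: Fix $\alpha,\beta,d>0$ and $f\in\mathscr{C}^1([0,1])$ with $f(0)=f(1)=0$, $0<f(u)\le f'(0)u$ on $(0,1)$, extended to a locally Lipschitz function on $\mathbb{R}$ negative on $\mathbb{R}\setminus[0,1]$. Consider sequences indexed by $n\in\mathbb{N}$ of pairs $(\mathbf{v}^n,\boldsymbol{\rho}^n)=(v^n_j,\rho^n_j)_{j\in\mathbb{Z}}$, where for $n=0$ the $v^0_j$ are continuous functions on $[0,+\infty)\times[0,1]$ and $\rho^0_j$ continuous on $[0,+\infty)$, and for every $n\ge1$ and $j$: $\rho^n_j\in\mathscr{C}^1([0,+\infty))$, $v^n_j\in\mathscr{C}^0([0,+\infty)\times[0,1])$, $\partial_tv^n_j,\partial_x^2v^n_j\in\mathscr{C}^0((0,+\infty)\times(0,1))$, $\partial_xv^n_j\in\mathscr{C}^0((0,+\infty)\times[0,1])$. Such a sequence $(\overline{\mathbf{v}}^n,\overline{\boldsymbol{\rho}}^n)_n$ is a supersolution of the iterative scheme if for all $n\ge1$, $t>0$, $j\in\mathbb{Z}$: $\partial_t\overline{v}^n_j\ge d\,\partial_x^2\overline{v}^n_j$ on $(0,1)$; $(\overline{\rho}^n_j)'(t)\ge f(\overline{\rho}^n_j(t))+\alpha(\overline{v}^{n-1}_j(t,0)+\overline{v}^{n-1}_{j-1}(t,1))-2\beta\overline{\rho}^n_j(t)$; $-d\,\partial_x\overline{v}^n_j(t,0)+\alpha\overline{v}^n_j(t,0)\ge\beta\overline{\rho}^n_j(t)$; $d\,\partial_x\overline{v}^n_j(t,1)+\alpha\overline{v}^n_j(t,1)\ge\beta\overline{\rho}^n_{j+1}(t)$.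 A subsolution is defined with all these inequalities reversed. *)

(* Defs.v *)
From Stdlib Require Import Reals ZArith.
From Coquelicot Require Import Coquelicot.
Open Scope R_scope.

Definition C1_R (g : R -> R) : Prop :=
  (forall x, ex_derive g x) /\ (forall x, continuous (Derive g) x).

Definition cont_on1 (S : R -> Prop) (g : R -> R) : Prop :=
  forall t, S t -> filterlim g (within S (locally t)) (locally (g t)).

Definition cont_on2 (S : R -> R -> Prop) (g : R -> R -> R) : Prop :=
  forall t x, S t x ->
    filterlim (fun p : R * R => g (fst p) (snd p))
      (within (fun p : R * R => S (fst p) (snd p)) (locally (t, x)))
      (locally (g t x)).

Definition Q_closed (t x : R) : Prop := 0 <= t /\ 0 <= x <= 1.
Definition Q_open (t x : R) : Prop := 0 < t /\ 0 < x < 1.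
Definition Q_side (t x : R) : Prop := 0 < t /\ 0 <= x <= 1.

(* l is the x-derivative of v at (t,x) relative to [0,1]
   (two-sided at interior points, one-sided at x = 0 and x = 1). *)
Definition pdx_in01 (v : R -> R -> R) (t x l : R) : Prop :=
  filterlim (fun y => (v t y - v t x) / (y - x))
    (within (fun y => 0 <= y <= 1 /\ y <> x) (locally x)) (locally l).

(* Standing assumptions on f: f in C^1([0,1]) (i.e. f|[0,1] is the restriction
   of a C^1 function g on R; f'(0) := g'(0)), f(0)=f(1)=0,
   0 < f(u) <= f'(0) u on (0,1), f locally Lipschitz on R, f < 0 off [0,1]. *)
Definition KPP_f (f : R -> R) : Prop :=
  (exists g : R -> R, C1_R g /\ (forall u, 0 <= u <= 1 -> g u = f u) /\
      (forall u, 0 < u < 1 -> 0 < f u /\ f u <= Derive g 0 * u)) /\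
  f 0 = 0 /\ f 1 = 0 /\
  (forall a b, exists L, forall x y, a <= x <= b -> a <= y <= b ->
       Rabs (f x - f y) <= L * Rabs (x - y)) /\
  (forall u, (u < 0 \/ 1 < u) -> f u < 0).

(* Sequences: v n j t x = v^n_j(t,x), rho n j t = rho^n_j(t). *)
Definition vseq := nat -> Z -> R -> R -> R.
Definition rseq := nat -> Z -> R -> R.

(* Regularity at level n >= 1 of (v^n_j, rho^n_j), with the partial derivatives
   of v given by witnesses vt, vx, vxx. rho in C^1([0,+oo)) is expressed as
   "rho coincides on [0,+oo) with a C^1 function on R". *)
Definition regular_n (v : R -> R -> R) (rho : R -> R) (vt vx vxx : R -> R -> R) : Prop :=
  (exists G : R -> R, C1_R G /\ forall t, 0 <= t -> G t = rho t) /\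
  cont_on2 Q_closed v /\
  (forall t x, Q_open t x ->
     is_derive (fun s => v s x) t (vt t x) /\
     is_derive (fun y => vx t y) x (vxx t x)) /\
  (forall t x, Q_side t x -> pdx_in01 v t x (vx t x)) /\
  cont_on2 Q_open vt /\ cont_on2 Q_open vxx /\ cont_on2 Q_side vx.

Definition regular_0 (v : vseq) (rho : rseq) : Prop :=
  forall j, cont_on2 Q_closed (v 0%nat j) /\ cont_on1 (fun t => 0 <= t) (rho 0%nat j).

Definition supersolution (d alpha beta : R) (f : R -> R) (v : vseq) (rho : rseq) : Prop :=
  regular_0 v rho /\
  forall n : nat, (1 <= n)%nat -> forall j : Z,
  exists vt vx vxx : R -> R -> R,
    regular_n (v n j) (rho n j) vt vx vxx /\
    forall t, 0 < t ->
      (forall x, 0 < x < 1 -> vt t x >= d * vxx t x) /\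
      Derive (rho n j) t >= f (rho n j t)
          + alpha * (v (n - 1)%nat j t 0 + v (n - 1)%nat (j - 1)%Z t 1)
          - 2 * beta * rho n j t /\
      - d * vx t 0 + alpha * v n j t 0 >= beta * rho n j t /\
      d * vx t 1 + alpha * v n j t 1 >= beta * rho n (j + 1)%Z t.

Definition subsolution (d alpha beta : R) (f : R -> R) (v : vseq) (rho : rseq) : Prop :=
  regular_0 v rho /\
  forall n : nat, (1 <= n)%nat -> forall j : Z,
  exists vt vx vxx : R -> R -> R,
    regular_n (v n j) (rho n j) vt vx vxx /\
    forall t, 0 < t ->
      (forall x, 0 < x < 1 -> vt t x <= d * vxx t x) /\
      Derive (rho n j) t <= f (rho n j t)
          + alpha * (v (n - 1)%nat j t 0 + v (n - 1)%nat (j - 1)%Z t 1)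
          - 2 * beta * rho n j t /\
      - d * vx t 0 + alpha * v n j t 0 <= beta * rho n j t /\
      d * vx t 1 + alpha * v n j t 1 <= beta * rho n (j + 1)%Z t.

(* Main.v *)
Require Import Defs.
From Stdlib Require Import Reals ZArith Lra Lia Psatz Classical ClassicalEpsilon.
From Coquelicot Require Import Coquelicot.
Open Scope R_scope.

Definition cont_ed (W : R -> R -> R) : Prop :=
  forall t x, 0 <= t -> 0 <= x <= 1 -> forall eps, 0 < eps ->
  exists del, 0 < del /\ forall s y, 0 <= s -> 0 <= y <= 1 ->
    Rabs (s - t) < del -> Rabs (y - x) < del -> Rabs (W s y - W t x) < eps.

Lemma cont2_ed (g : R -> R -> R) : cont_on2 Q_closed g -> cont_ed g.
Proof.
  intros H t x Ht Hx eps Heps.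
  assert (HQ : Q_closed t x) by (split; auto).
  specialize (H t x HQ).
  assert (Hb : locally (g t x) (ball (g t x) eps)) by (apply (locally_ball (g t x) (mkposreal eps Heps))).
  specialize (H _ Hb).
  destruct H as [del Hdel].
  exists (pos del); split; [apply cond_pos|].
  intros s y Hs Hy Hst Hyx.
  assert (Hb2 : ball (t, x) del (s, y)) by (split; assumption).
  specialize (Hdel (s, y) Hb2 (conj Hs Hy)).
  exact Hdel.
Qed.

Lemma cont1_ed (g : R -> R) t : continuous g t -> forall eps, 0 < eps ->
  exists del, 0 < del /\ forall s, Rabs (s - t) < del -> Rabs (g s - g t) < eps.
Proof.
  intros H eps Heps.
  assert (Hb : locally (g t) (ball (g t) eps)) by (apply (locally_ball (g t) (mkposreal eps Heps))).
  specialize (H _ Hb).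
  destruct H as [del Hdel].
  exists (pos del); split; [apply cond_pos|].
  intros s Hs. exact (Hdel s Hs).
Qed.

Lemma unif_neg (W : R -> R -> R) t0 : cont_ed W -> 0 <= t0 ->
  (forall x, 0 <= x <= 1 -> W t0 x < 0) ->
  exists del, 0 < del /\ forall s x, 0 <= s -> Rabs (s - t0) < del -> 0 <= x <= 1 -> W s x < 0.
Proof.
  intros HC Ht0 Hneg.
  assert (X : forall x, {dl : posreal | 0 <= x <= 1 -> forall s y, 0 <= s -> 0 <= y <= 1 ->
     Rabs (s - t0) < dl -> Rabs (y - x) < dl -> W s y < 0}).
  { intro x. apply constructive_indefinite_description.
    destruct (classic (0 <= x <= 1)) as [Hx|Hx].
    - destruct (HC t0 x Ht0 Hx (- W t0 x)) as [dl [Hdl H]].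
      + specialize (Hneg x Hx); lra.
      + exists (mkposreal dl Hdl). intros _ s y Hs Hy H1 H2. simpl in *.
        specialize (H s y Hs Hy H1 H2). apply Rabs_def2 in H. lra.
    - exists (mkposreal 1 Rlt_0_1). intros H; contradiction. }
  destruct (compactness_value_1d 0 1 (fun x => proj1_sig (X x))) as [dd Hdd].
  exists (pos dd); split; [apply cond_pos|].
  intros s x Hs Hst Hx.
  destruct (Rlt_or_le (W s x) 0) as [Hl|Hl]; auto.
  exfalso. apply (Hdd x Hx). intros [t' [Ht' [Hxt Hd]]].
  destruct (X t') as [dl Hdl]; simpl in *.
  specialize (Hdl Ht' s x Hs Hx ltac:(lra) Hxt). lra.
Qed.

Lemma first_time (W : R -> R -> R) t0 x0 : cont_ed W ->
  (forall x, 0 <= x <= 1 -> W 0 x < 0) -> 0 <= t0 -> 0 <= x0 <= 1 -> 0 <= W t0 x0 ->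
  exists ts, 0 < ts <= t0 /\ (forall s x, 0 <= s < ts -> 0 <= x <= 1 -> W s x < 0) /\
    (forall x, 0 <= x <= 1 -> W ts x <= 0) /\ exists x, 0 <= x <= 1 /\ 0 <= W ts x.
Proof.
  intros HC H0 Ht0 Hx0 HW.
  set (E := fun s => 0 <= s <= t0 /\ forall tau x, 0 <= tau <= s -> 0 <= x <= 1 -> W tau x < 0).
  destruct (completeness E) as [ts [Hub Hlub]].
  { exists t0. intros s Es. apply Es. }
  { exists 0. split; [lra|]. intros tau x Htau Hx. replace tau with 0 by lra. auto. }
  assert (key : forall tau x, 0 <= tau < ts -> 0 <= x <= 1 -> W tau x < 0).
  { intros tau x Htau Hx.
    destruct (classic (exists s, E s /\ tau < s)) as [[s [Es Hs]]|Hn].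
    - apply Es; auto; lra.
    - exfalso. assert (ts <= tau); [|lra]. apply Hlub. intros s Es.
      destruct (Rle_or_lt s tau); auto. exfalso; apply Hn; eauto. }
  assert (Hts0 : ts <= t0) by (apply Hlub; intros s Es; apply Es).
  assert (Ht0p : 0 < t0).
  { destruct Ht0 as [|Ht0]; auto. subst t0. specialize (H0 x0 Hx0). lra. }
  assert (Htsp : 0 < ts).
  { destruct (unif_neg W 0 HC (Rle_refl 0) H0) as [dl [Hdl H]].
    assert (E (Rmin (dl/2) t0)).
    { split. split; [apply Rmin_glb; lra| apply Rmin_r].
      intros tau x Htau Hx. apply H; auto; try lra.
      assert (Rmin (dl/2) t0 <= dl/2) by apply Rmin_l.
      rewrite Rminus_0_r, Rabs_right; lra. }
    specialize (Hub _ H1). unfold Rmin in Hub. destruct Rle_dec; lra. }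
  assert (Hexi : exists x, 0 <= x <= 1 /\ 0 <= W ts x).
  { destruct (classic (exists x, 0 <= x <= 1 /\ 0 <= W ts x)) as [|Hn]; auto.
    exfalso.
    assert (Hneg : forall x, 0 <= x <= 1 -> W ts x < 0).
    { intros x Hx. destruct (Rlt_or_le (W ts x) 0); auto. exfalso; eauto. }
    destruct (Req_dec ts t0) as [Heq|Hne].
    { subst ts. specialize (Hneg x0 Hx0). lra. }
    destruct (unif_neg W ts HC ltac:(lra) Hneg) as [dl [Hdl H]].
    assert (E (Rmin (ts + dl/2) t0)).
    { assert (Rmin (ts + dl/2) t0 <= ts + dl/2) by apply Rmin_l.
      split. split; [apply Rmin_glb; lra| apply Rmin_r].
      intros tau x Htau Hx. destruct (Rlt_or_le tau ts).
      - apply key; auto; lra.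
      - apply H; auto; try lra. rewrite Rabs_right; lra. }
    specialize (Hub _ H1). unfold Rmin in Hub. destruct Rle_dec; lra. }
  exists ts. split; [lra|]. split; [exact key|]. split; [|exact Hexi].
  intros x Hx. destruct (Rle_or_lt (W ts x) 0) as [|Hp]; auto. exfalso.
  destruct (HC ts x ltac:(lra) Hx (W ts x) Hp) as [dl [Hdl H]].
  set (tau := Rmax 0 (ts - dl/2)).
  assert (0 <= tau) by apply Rmax_l.
  assert (tau < ts /\ ts - dl/2 <= tau).
  { unfold tau, Rmax. destruct Rle_dec; lra. }
  specialize (H tau x ltac:(lra) Hx).
  rewrite Rminus_diag, Rabs_R0 in H.
  rewrite Rabs_left in H by lra.
  specialize (H ltac:(lra) Hdl). apply Rabs_def2 in H.
  specialize (key tau x ltac:(lra) Hx). lra.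
Qed.

Lemma left_deriv (g : R -> R) t l : is_derive g t l ->
  (exists del, 0 < del /\ forall s, t - del < s < t -> g s <= g t) -> 0 <= l.
Proof.
  intros Hd [del [Hdel Hs]].
  apply is_derive_Reals in Hd.
  destruct (Rle_or_lt 0 l) as [|Hl]; auto. exfalso.
  destruct (Hd (- l / 2) ltac:(lra)) as [dd Hdd].
  set (h := - (Rmin del dd) / 2).
  assert (Hm : 0 < Rmin del dd) by (apply Rmin_glb_lt; [lra|apply cond_pos]).
  assert (Hm1 : Rmin del dd <= del) by apply Rmin_l.
  assert (Hm2 : Rmin del dd <= dd) by apply Rmin_r.
  assert (Hh : h <> 0) by (unfold h; lra).
  assert (Hha : Rabs h < dd) by (unfold h; rewrite Rabs_left; lra).
  specialize (Hdd h Hh Hha). apply Rabs_def2 in Hdd.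
  specialize (Hs (t + h) ltac:(unfold h; lra)).
  set (q := (g (t + h) - g t) / h) in *.
  assert (q * h = g (t + h) - g t) by (unfold q; field; auto).
  assert (h < 0) by (unfold h; lra).
  nra.
Qed.

Lemma right_deriv (g : R -> R) t l : is_derive g t l ->
  (exists del, 0 < del /\ forall s, t < s < t + del -> g s <= g t) -> l <= 0.
Proof.
  intros Hd [del [Hdel Hs]].
  apply is_derive_Reals in Hd.
  destruct (Rle_or_lt l 0) as [|Hl]; auto. exfalso.
  destruct (Hd (l / 2) ltac:(lra)) as [dd Hdd].
  set (h := (Rmin del dd) / 2).
  assert (Hm : 0 < Rmin del dd) by (apply Rmin_glb_lt; [lra|apply cond_pos]).
  assert (Hm1 : Rmin del dd <= del) by apply Rmin_l.
  assert (Hm2 : Rmin del dd <= dd) by apply Rmin_r.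
  assert (Hh : h <> 0) by (unfold h; lra).
  assert (Hha : Rabs h < dd) by (unfold h; rewrite Rabs_right; lra).
  specialize (Hdd h Hh Hha). apply Rabs_def2 in Hdd.
  specialize (Hs (t + h) ltac:(unfold h; lra)).
  set (q := (g (t + h) - g t) / h) in *.
  assert (q * h = g (t + h) - g t) by (unfold q; field; auto).
  assert (0 < h) by (unfold h; lra).
  nra.
Qed.

Definition qlim (g : R -> R) x l : Prop := forall eps, 0 < eps -> exists del, 0 < del /\
  forall y, 0 <= y <= 1 -> y <> x -> Rabs (y - x) < del -> Rabs ((g y - g x) / (y - x) - l) < eps.

Lemma pdx_qlim v t x l : pdx_in01 v t x l -> qlim (v t) x l.
Proof.
  intros H eps Heps.
  assert (Hb : locally l (ball l eps)) by (apply (locally_ball l (mkposreal eps Heps))).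
  specialize (H _ Hb).
  destruct H as [del Hdel].
  exists (pos del); split; [apply cond_pos|].
  intros y Hy Hyx Hd. exact (Hdel y Hd (conj Hy Hyx)).
Qed.

Lemma qlim_sub g h x a b c : qlim g x a -> qlim h x b -> qlim (fun y => g y - h y - c) x (a - b).
Proof.
  intros Ha Hb eps Heps.
  destruct (Ha (eps/2) ltac:(lra)) as [d1 [Hd1 H1]].
  destruct (Hb (eps/2) ltac:(lra)) as [d2 [Hd2 H2]].
  exists (Rmin d1 d2). split; [apply Rmin_glb_lt; auto|].
  intros y Hy Hyx Hd.
  assert (Rmin d1 d2 <= d1) by apply Rmin_l.
  assert (Rmin d1 d2 <= d2) by apply Rmin_r.
  specialize (H1 y Hy Hyx ltac:(lra)). specialize (H2 y Hy Hyx ltac:(lra)).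
  replace ((g y - h y - c - (g x - h x - c)) / (y - x) - (a - b)) with
    (((g y - g x) / (y - x) - a) - ((h y - h x) / (y - x) - b)) by (field; lra).
  apply Rabs_def2 in H1. apply Rabs_def2 in H2. apply Rabs_def1; lra.
Qed.

Lemma qlim_right g x l : qlim g x l -> 0 <= x < 1 -> (forall y, x < y <= 1 -> g y <= g x) -> l <= 0.
Proof.
  intros H Hx Hy. destruct (Rle_or_lt l 0) as [|Hl]; auto. exfalso.
  destruct (H (l/2) ltac:(lra)) as [dl [Hdl Hq]].
  set (y := x + Rmin dl (1 - x) / 2).
  assert (Hm : 0 < Rmin dl (1 - x)) by (apply Rmin_glb_lt; lra).
  assert (Rmin dl (1 - x) <= dl) by apply Rmin_l.
  assert (Rmin dl (1 - x) <= 1 - x) by apply Rmin_r.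
  specialize (Hq y ltac:(unfold y; lra) ltac:(unfold y; lra) ltac:(unfold y; rewrite Rabs_right; lra)).
  specialize (Hy y ltac:(unfold y; lra)).
  apply Rabs_def2 in Hq.
  set (q := (g y - g x) / (y - x)) in *.
  assert (q * (y - x) = g y - g x) by (unfold q; field; unfold y; lra).
  assert (0 < y - x) by (unfold y; lra). nra.
Qed.

Lemma qlim_left g x l : qlim g x l -> 0 < x <= 1 -> (forall y, 0 <= y < x -> g y <= g x) -> 0 <= l.
Proof.
  intros H Hx Hy. destruct (Rle_or_lt 0 l) as [|Hl]; auto. exfalso.
  destruct (H (-l/2) ltac:(lra)) as [dl [Hdl Hq]].
  set (y := x - Rmin dl x / 2).
  assert (Hm : 0 < Rmin dl x) by (apply Rmin_glb_lt; lra).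
  assert (Rmin dl x <= dl) by apply Rmin_l.
  assert (Rmin dl x <= x) by apply Rmin_r.
  specialize (Hq y ltac:(unfold y; lra) ltac:(unfold y; lra) ltac:(unfold y; rewrite Rabs_left; lra)).
  specialize (Hy y ltac:(unfold y; lra)).
  apply Rabs_def2 in Hq.
  set (q := (g y - g x) / (y - x)) in *.
  assert (q * (y - x) = g y - g x) by (unfold q; field; unfold y; lra).
  assert (y - x < 0) by (unfold y; lra). nra.
Qed.

Lemma qlim_deriv g x l : qlim g x l -> 0 < x < 1 -> is_derive g x l.
Proof.
  intros H Hx. apply is_derive_Reals. intros eps Heps.
  destruct (H eps Heps) as [dl [Hdl Hq]].
  assert (Hm : 0 < Rmin dl (Rmin x (1 - x))) by (repeat apply Rmin_glb_lt; lra).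
  exists (mkposreal _ Hm). intros h Hh Hha. simpl in Hha.
  assert (Rmin dl (Rmin x (1 - x)) <= dl) by apply Rmin_l.
  assert (Rmin dl (Rmin x (1 - x)) <= Rmin x (1 - x)) by apply Rmin_r.
  assert (Rmin x (1 - x) <= x) by apply Rmin_l.
  assert (Rmin x (1 - x) <= 1 - x) by apply Rmin_r.
  apply Rabs_def2 in Hha as Hh2.
  specialize (Hq (x + h) ltac:(lra) ltac:(lra)).
  replace (x + h - x) with h in Hq by ring.
  apply Hq. lra.
Qed.

Lemma deriv_contpt (g : R -> R) (x l : R) : is_derive g x l -> continuity_pt g x.
Proof.
  intros H. apply (continuity_pt_filterlim g x).
  exact (ex_derive_continuous (K:=R_AbsRing) (V:=R_NormedModule) g x (ex_intro _ l H)).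
Qed.

Lemma int_max_second (g gx : R -> R) x gxx : 0 < x < 1 ->
  (forall y, 0 < y < 1 -> is_derive g y (gx y)) -> is_derive gx x gxx ->
  (forall y, 0 <= y <= 1 -> g y <= g x) -> gxx <= 0.
Proof.
  intros Hx Hd Hdd Hmax.
  assert (Hgx0 : gx x = 0).
  { apply Rle_antisym.
    - apply (right_deriv g x); auto. exists (1 - x); split; [lra|]. intros s Hs; apply Hmax; lra.
    - apply (left_deriv g x); auto. exists x; split; [lra|]. intros s Hs; apply Hmax; lra. }
  destruct (Rle_or_lt gxx 0) as [|Hp]; auto. exfalso.
  apply is_derive_Reals in Hdd.
  destruct (Hdd (gxx/2) ltac:(lra)) as [dl Hdl].
  assert (Hpos : forall y, x < y < x + dl -> 0 < gx y).
  { intros y Hy. specialize (Hdl (y - x) ltac:(lra) ltac:(rewrite Rabs_right; lra)).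
    replace (x + (y - x)) with y in Hdl by ring. rewrite Hgx0 in Hdl.
    apply Rabs_def2 in Hdl.
    set (q := (gx y - 0) / (y - x)) in *.
    assert (q * (y - x) = gx y - 0) by (unfold q; field; lra). nra. }
  assert (Hm : 0 < Rmin dl (1 - x)) by (apply Rmin_glb_lt; [apply cond_pos|lra]).
  assert (Rmin dl (1 - x) <= dl) by apply Rmin_l.
  assert (Rmin dl (1 - x) <= 1 - x) by apply Rmin_r.
  set (y0 := x + Rmin dl (1 - x) / 2). set (y1 := x + Rmin dl (1 - x) / 4).
  assert (x < y1 < y0 /\ y0 < x + dl /\ y0 < 1) by (unfold y0, y1; lra).
  destruct (MVT_gen g x y1 gx) as [c [Hc Heq]].
  { intros z Hz. rewrite Rmin_left in Hz by lra. rewrite Rmax_right in Hz by lra. apply Hd. lra. }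
  { intros z Hz. rewrite Rmin_left in Hz by lra. rewrite Rmax_right in Hz by lra.
    apply (deriv_contpt g z (gx z)). apply Hd. lra. }
  rewrite Rmin_left in Hc by lra. rewrite Rmax_right in Hc by lra.
  assert (0 <= gx c).
  { destruct (Req_dec c x). subst; lra. apply Rlt_le, Hpos; lra. }
  destruct (MVT_gen g y1 y0 gx) as [c' [Hc' Heq']].
  { intros z Hz. rewrite Rmin_left in Hz by lra. rewrite Rmax_right in Hz by lra. apply Hd. lra. }
  { intros z Hz. rewrite Rmin_left in Hz by lra. rewrite Rmax_right in Hz by lra.
    apply (deriv_contpt g z (gx z)). apply Hd. lra. }
  rewrite Rmin_left in Hc' by lra. rewrite Rmax_right in Hc' by lra.
  assert (0 < gx c') by (apply Hpos; lra).
  specialize (Hmax y0 ltac:(lra)).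
  assert (0 <= gx c * (y1 - x)) by (apply Rmult_le_pos; lra).
  assert (0 < gx c' * (y0 - y1)) by (apply Rmult_lt_0_compat; lra).
  lra.
Qed.

Definition clamp (y : R) := Rmax 0 (Rmin 1 y).

Lemma clamp_lip y c : Rabs (clamp y - clamp c) <= Rabs (y - c).
Proof. unfold clamp, Rmax, Rmin. repeat destruct Rle_dec; split_Rabs; lra. Qed.

Lemma clamp_id y : 0 <= y <= 1 -> clamp y = y.
Proof. intros. unfold clamp, Rmax, Rmin. repeat destruct Rle_dec; lra. Qed.

Lemma clamp_in y : 0 <= clamp y <= 1.
Proof. unfold clamp, Rmax, Rmin. repeat destruct Rle_dec; lra. Qed.

Lemma exists_max (W : R -> R -> R) ts : cont_ed W -> 0 <= ts ->
  exists xm, 0 <= xm <= 1 /\ forall y, 0 <= y <= 1 -> W ts y <= W ts xm.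
Proof.
  intros HC Hts.
  destruct (continuity_ab_maj (fun y => W ts (clamp y)) 0 1 ltac:(lra)) as [xm [Hm Hxm]].
  { intros c Hc. unfold continuity_pt, continue_in, limit1_in, limit_in. simpl.
    intros eps Heps.
    destruct (HC ts (clamp c) Hts (clamp_in c) eps Heps) as [dl [Hdl H]].
    exists dl. split; auto. intros y [_ Hy]. unfold Rdist in *.
    apply H; [exact Hts | apply clamp_in | rewrite Rminus_diag, Rabs_R0; auto | ].
    eapply Rle_lt_trans; [apply clamp_lip|]. auto. }
  exists xm. split; auto. intros y Hy. specialize (Hm y Hy).
  rewrite !clamp_id in Hm; auto.
Qed.

Lemma v_compare (d alpha : R) (vu vs vtu vts vxu vxs vxxu vxxs : R -> R -> R) :
  0 < d -> 0 < alpha ->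
  cont_on2 Q_closed vu -> cont_on2 Q_closed vs ->
  (forall t x, Q_open t x -> is_derive (fun s => vu s x) t (vtu t x) /\
     is_derive (fun y => vxu t y) x (vxxu t x)) ->
  (forall t x, Q_open t x -> is_derive (fun s => vs s x) t (vts t x) /\
     is_derive (fun y => vxs t y) x (vxxs t x)) ->
  (forall t x, Q_side t x -> pdx_in01 vu t x (vxu t x)) ->
  (forall t x, Q_side t x -> pdx_in01 vs t x (vxs t x)) ->
  (forall t x, 0 < t -> 0 < x < 1 -> vtu t x <= d * vxxu t x) ->
  (forall t x, 0 < t -> 0 < x < 1 -> vts t x >= d * vxxs t x) ->
  (forall t, 0 < t -> - d * vxu t 0 + alpha * vu t 0 <= - d * vxs t 0 + alpha * vs t 0) ->
  (forall t, 0 < t -> d * vxu t 1 + alpha * vu t 1 <= d * vxs t 1 + alpha * vs t 1) ->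
  (forall x, 0 <= x <= 1 -> vu 0 x <= vs 0 x) ->
  forall t x, 0 <= t -> 0 <= x <= 1 -> vu t x <= vs t x.
Proof.
  intros Hd Ha Hcu Hcs Hdu Hds Hpu Hps Heu Hes Hb0 Hb1 Hinit t x Ht Hx.
  destruct (Rle_or_lt (vu t x) (vs t x)) as [|Hgt]; auto. exfalso.
  set (eps := (vu t x - vs t x) / (2 * (1 + t))).
  assert (Heps : 0 < eps) by (unfold eps; apply Rdiv_lt_0_compat; lra).
  set (W := fun s y => vu s y - vs s y - eps * (1 + s)).
  assert (HC : cont_ed W).
  { intros t0 x0 Ht0 Hx0 e He.
    destruct (cont2_ed vu Hcu t0 x0 Ht0 Hx0 (e/3) ltac:(lra)) as [d1 [Hd1 H1]].
    destruct (cont2_ed vs Hcs t0 x0 Ht0 Hx0 (e/3) ltac:(lra)) as [d2 [Hd2 H2]].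
    set (d3 := e / (3 * eps)).
    assert (Hd3 : 0 < d3) by (unfold d3; apply Rdiv_lt_0_compat; lra).
    exists (Rmin d1 (Rmin d2 d3)). split; [repeat apply Rmin_glb_lt; auto|].
    intros s y Hs Hy Hst Hyx.
    assert (Rmin d1 (Rmin d2 d3) <= d1) by apply Rmin_l.
    assert (Rmin d1 (Rmin d2 d3) <= Rmin d2 d3) by apply Rmin_r.
    assert (Rmin d2 d3 <= d2) by apply Rmin_l.
    assert (Rmin d2 d3 <= d3) by apply Rmin_r.
    specialize (H1 s y Hs Hy ltac:(lra) ltac:(lra)).
    specialize (H2 s y Hs Hy ltac:(lra) ltac:(lra)).
    assert (Hst3 : Rabs (s - t0) < d3) by lra.
    assert (eps * Rabs (s - t0) < e / 3).
    { unfold d3 in Hst3. apply (Rmult_lt_compat_l eps) in Hst3; auto.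
      replace (eps * (e / (3 * eps))) with (e/3) in Hst3 by (field; lra). auto. }
    unfold W.
    replace (vu s y - vs s y - eps * (1 + s) - (vu t0 x0 - vs t0 x0 - eps * (1 + t0))) with
      ((vu s y - vu t0 x0) - (vs s y - vs t0 x0) - eps * (s - t0)) by ring.
    eapply Rle_lt_trans; [apply Rabs_triang|].
    rewrite Rabs_Ropp, Rabs_mult, (Rabs_right eps) by lra.
    eapply Rle_lt_trans; [apply Rplus_le_compat_r; apply Rabs_triang|].
    rewrite Rabs_Ropp. lra. }
  assert (H0 : forall y, 0 <= y <= 1 -> W 0 y < 0).
  { intros y Hy. unfold W. specialize (Hinit y Hy). lra. }
  assert (HWt : 0 <= W t x).
  { unfold W, eps. replace ((vu t x - vs t x) / (2 * (1 + t)) * (1 + t)) with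
      ((vu t x - vs t x) / 2) by (field; lra). lra. }
  destruct (first_time W t x HC H0 Ht Hx HWt) as [ts [Hts [Hbef [Hle [x1 [Hx1 Hx1W]]]]]].
  destruct (exists_max W ts HC ltac:(lra)) as [xm [Hxm Hmax]].
  assert (HWm : 0 <= W ts xm) by (specialize (Hmax x1 Hx1); lra).
  assert (Hql : qlim (W ts) xm (vxu ts xm - vxs ts xm)).
  { apply (qlim_sub (vu ts) (vs ts)); apply pdx_qlim; [apply Hpu|apply Hps]; split; lra. }
  assert (Hdiffpos : eps * (1 + ts) <= vu ts xm - vs ts xm) by (unfold W in HWm; lra).
  assert (0 < eps * (1 + ts)) by (apply Rmult_lt_0_compat; lra).
  destruct (Req_dec xm 0) as [E0|N0].
  { subst xm. assert (Hl : vxu ts 0 - vxs ts 0 <= 0).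
    { apply (qlim_right (W ts) 0); auto. lra. intros y Hy. apply Hmax. lra. }
    specialize (Hb0 ts ltac:(lra)). nra. }
  destruct (Req_dec xm 1) as [E1|N1].
  { subst xm. assert (Hl : 0 <= vxu ts 1 - vxs ts 1).
    { apply (qlim_left (W ts) 1); auto. lra. intros y Hy. apply Hmax. lra. }
    specialize (Hb1 ts ltac:(lra)). nra. }
  assert (Hxin : 0 < xm < 1) by lra.
  assert (HQ : Q_open ts xm) by (split; lra).
  destruct (Hdu ts xm HQ) as [Htu Hxxu].
  destruct (Hds ts xm HQ) as [Hts' Hxxs].
  assert (Htt : 0 <= vtu ts xm - vts ts xm - eps).
  { apply (left_deriv (fun s => W s xm) ts).
    - unfold W. apply (is_derive_minus (fun s => vu s xm - vs s xm) (fun s => eps * (1 + s))).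
      + apply (is_derive_minus (fun s => vu s xm) (fun s => vs s xm)); auto.
      + auto_derive; auto. ring.
    - exists ts. split; [lra|]. intros s Hs.
      specialize (Hbef s xm ltac:(lra) ltac:(lra)). lra. }
  assert (Hxx : vxxu ts xm - vxxs ts xm <= 0).
  { apply (int_max_second (W ts) (fun y => vxu ts y - vxs ts y) xm); auto.
    - intros y Hy. apply qlim_deriv; auto.
      apply (qlim_sub (vu ts) (vs ts)); apply pdx_qlim; [apply Hpu|apply Hps]; split; lra.
    - apply (is_derive_minus (fun y => vxu ts y) (fun y => vxs ts y)); auto. }
  specialize (Heu ts xm ltac:(lra) Hxin). specialize (Hes ts xm ltac:(lra) Hxin).
  nra.
Qed.

Lemma rho_compare (alpha beta : R) (f : R -> R) (ru rs Gu Gs Au As : R -> R) :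
  0 < alpha -> 0 < beta ->
  (forall a b, exists L, forall x y, a <= x <= b -> a <= y <= b ->
       Rabs (f x - f y) <= L * Rabs (x - y)) ->
  C1_R Gu -> C1_R Gs -> (forall t, 0 <= t -> Gu t = ru t) -> (forall t, 0 <= t -> Gs t = rs t) ->
  (forall t, 0 < t -> Au t <= As t) ->
  (forall t, 0 < t -> Derive ru t <= f (ru t) + alpha * Au t - 2 * beta * ru t) ->
  (forall t, 0 < t -> Derive rs t >= f (rs t) + alpha * As t - 2 * beta * rs t) ->
  ru 0 <= rs 0 -> forall t, 0 < t -> ru t <= rs t.
Proof.
  intros Ha Hb Hlip [Hdu _] [Hds _] Egu Egs HA Hu Hsd H0 t Ht.
  destruct (Rle_or_lt (ru t) (rs t)) as [|Hgt]; auto. exfalso.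
  assert (Hcu : forall c, continuity_pt Gu c) by (intros c; destruct (Hdu c) as [l Hl]; eapply deriv_contpt; eauto).
  assert (Hcs : forall c, continuity_pt Gs c) by (intros c; destruct (Hds c) as [l Hl]; eapply deriv_contpt; eauto).
  destruct (continuity_ab_min Gu 0 t ltac:(lra) (fun c _ => Hcu c)) as [mu [Hmu _]].
  destruct (continuity_ab_maj Gu 0 t ltac:(lra) (fun c _ => Hcu c)) as [Mu [HMu _]].
  destruct (continuity_ab_min Gs 0 t ltac:(lra) (fun c _ => Hcs c)) as [ms [Hms _]].
  destruct (continuity_ab_maj Gs 0 t ltac:(lra) (fun c _ => Hcs c)) as [Ms [HMs _]].
  set (a := Rmin (Gu mu) (Gs ms)). set (b := Rmax (Gu Mu) (Gs Ms)).
  assert (Ha1 : a <= Gu mu) by apply Rmin_l. assert (Ha2 : a <= Gs ms) by apply Rmin_r.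
  assert (Hb1 : Gu Mu <= b) by apply Rmax_l. assert (Hb2 : Gs Ms <= b) by apply Rmax_r.
  destruct (Hlip a b) as [L HL].
  set (K := Rabs L + 1).
  assert (HK : 0 < K) by (unfold K; pose proof (Rabs_pos L); lra).
  set (eps := (ru t - rs t) / (2 * exp (K * t))).
  assert (Hexp : forall s, 0 < exp s) by apply exp_pos.
  assert (Heps : 0 < eps) by (unfold eps; apply Rdiv_lt_0_compat; [lra| specialize (Hexp (K*t)); lra]).
  set (g := fun s => Gu s - Gs s - eps * exp (K * s)).
  assert (Hgd : forall s, is_derive g s (Derive Gu s - Derive Gs s - eps * (K * exp (K * s)))).
  { intros s. unfold g.
    apply (is_derive_minus (fun s => Gu s - Gs s) (fun s => eps * exp (K * s))).
    + apply (is_derive_minus Gu Gs); apply Derive_correct; auto.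
    + auto_derive; auto. ring. }
  set (W := fun s (_ : R) => g s).
  assert (HC : cont_ed W).
  { intros t0 x0 _ _ e He.
    assert (Hct : continuous g t0).
    { apply (ex_derive_continuous (K:=R_AbsRing) (V:=R_NormedModule) g t0). eexists; apply Hgd. }
    destruct (cont1_ed g t0 Hct e He) as [dl [Hdl H]].
    exists dl; split; auto. intros s y _ _ Hs _. apply H; auto. }
  assert (HW0 : forall x, 0 <= x <= 1 -> W 0 x < 0).
  { intros x _. unfold W, g. rewrite Rmult_0_r, exp_0, Egu, Egs by lra. lra. }
  assert (HWt : 0 <= W t 0).
  { unfold W, g, eps. rewrite Egu, Egs by lra.
    replace ((ru t - rs t) / (2 * exp (K * t)) * exp (K * t)) with ((ru t - rs t)/2)
      by (field; specialize (Hexp (K*t)); lra). lra. }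
  destruct (first_time W t 0 HC HW0 ltac:(lra) ltac:(lra) HWt) as [ts [Hts [Hbef [Hle [x1 [Hx1 HWx1]]]]]].
  assert (Hgts : g ts = 0) by (specialize (Hle 0 ltac:(lra)); unfold W in *; lra).
  assert (Hder : 0 <= Derive Gu ts - Derive Gs ts - eps * (K * exp (K * ts))).
  { apply (left_deriv g ts); auto. exists ts. split; [lra|]. intros s Hs.
    specialize (Hbef s 0 ltac:(lra) ltac:(lra)). unfold W in Hbef. lra. }
  assert (Hloc : forall G r, (forall t, 0 <= t -> G t = r t) -> Derive G ts = Derive r ts).
  { intros G r EG. apply Derive_ext_loc. exists (mkposreal ts (proj1 Hts)).
    intros y Hy. apply EG. unfold ball in Hy; simpl in Hy.
    unfold AbsRing_ball, abs, minus, plus, opp in Hy; simpl in Hy.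
    apply Rabs_def2 in Hy. lra. }
  rewrite (Hloc Gu ru Egu), (Hloc Gs rs Egs) in Hder.
  set (E := eps * exp (K * ts)).
  assert (HE : 0 < E) by (unfold E; apply Rmult_lt_0_compat; auto).
  assert (Hdiff : ru ts - rs ts = E).
  { unfold g in Hgts. rewrite Egu, Egs in Hgts by lra. unfold E; lra. }
  assert (Hru : a <= ru ts <= b).
  { rewrite <- Egu by lra. specialize (Hmu ts ltac:(lra)). specialize (HMu ts ltac:(lra)). lra. }
  assert (Hrs : a <= rs ts <= b).
  { rewrite <- Egs by lra. specialize (Hms ts ltac:(lra)). specialize (HMs ts ltac:(lra)). lra. }
  specialize (HL _ _ Hru Hrs). rewrite Hdiff, (Rabs_right E) in HL by lra.
  pose proof (Rle_abs (f (ru ts) - f (rs ts))) as HL2.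
  assert (HLE : L * E <= Rabs L * E) by (apply Rmult_le_compat_r; [lra|apply Rle_abs]).
  specialize (Hu ts ltac:(lra)). specialize (Hsd ts ltac:(lra)). specialize (HA ts ltac:(lra)).
  assert (HKE : eps * (K * exp (K * ts)) = K * E) by (unfold E; ring).
  assert (Hab : alpha * Au ts <= alpha * As ts) by (apply Rmult_le_compat_l; lra).
  assert (Hbe : 2 * beta * ru ts - 2 * beta * rs ts = 2 * beta * E) by (rewrite <- Hdiff; ring).
  assert (HKE2 : K * E = Rabs L * E + E) by (unfold K; ring).
  assert (0 < 2 * beta * E) by (apply Rmult_lt_0_compat; lra).
  lra.
Qed.

Theorem proposition2p3 :
  forall (d alpha beta : R) (f : R -> R),
    0 < alpha -> 0 < beta -> 0 < d -> KPP_f f ->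
  forall (vs : vseq) (rs : rseq) (vu : vseq) (ru : rseq),
    supersolution d alpha beta f vs rs ->
    subsolution d alpha beta f vu ru ->
    (forall (j : Z) t x, 0 <= t -> 0 <= x <= 1 -> vu 0%nat j t x <= vs 0%nat j t x) ->
    (forall (j : Z) t, 0 <= t -> ru 0%nat j t <= rs 0%nat j t) ->
    (forall n : nat, (1 <= n)%nat -> forall (j : Z) x, 0 <= x <= 1 ->
        vu n j 0 x <= vs n j 0 x) ->
    (forall n : nat, (1 <= n)%nat -> forall j : Z, ru n j 0 <= rs n j 0) ->
  forall n : nat, (1 <= n)%nat -> forall (j : Z) t, 0 < t ->
    (forall x, 0 <= x <= 1 -> vu n j t x <= vs n j t x) /\
    ru n j t <= rs n j t.
Proof.
  intros d alpha beta f Ha Hb Hd Hf vs rs vu ru Hsup Hsub Hv0 Hr0 Hvn Hrn.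
  destruct Hf as [_ [_ [_ [Hlip _]]]].
  destruct Hsup as [_ Hsup]; destruct Hsub as [_ Hsub].
  assert (Main : forall m, (forall j t, 0 < t -> forall x, 0 <= x <= 1 -> vu m j t x <= vs m j t x) ->
    (forall j t, 0 < t -> ru (S m) j t <= rs (S m) j t) /\
    (forall j t, 0 < t -> forall x, 0 <= x <= 1 -> vu (S m) j t x <= vs (S m) j t x)).
  { intros m IH.
    assert (Hrho : forall j t, 0 < t -> ru (S m) j t <= rs (S m) j t).
    { intros j.
      destruct (Hsup (S m) ltac:(lia) j) as [vts [vxs [vxxs [[[Gs [HGs EGs]] _] Hs]]]].
      destruct (Hsub (S m) ltac:(lia) j) as [vtu [vxu [vxxu [[[Gu [HGu EGu]] _] Hu]]]].
      replace (S m - 1)%nat with m in Hs, Hu by lia.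
      apply (rho_compare alpha beta f (ru (S m) j) (rs (S m) j) Gu Gs
        (fun t => vu m j t 0 + vu m (j - 1)%Z t 1) (fun t => vs m j t 0 + vs m (j - 1)%Z t 1)); auto.
      - intros t Ht. pose proof (IH j t Ht 0 ltac:(lra)). pose proof (IH (j - 1)%Z t Ht 1 ltac:(lra)). lra.
      - intros t Ht. exact (proj1 (proj2 (Hu t Ht))).
      - intros t Ht. exact (proj1 (proj2 (Hs t Ht))).
      - apply Hrn. lia. }
    split; auto.
    intros j t Ht x Hx.
    destruct (Hsup (S m) ltac:(lia) j) as [vts [vxs [vxxs [[_ [Hcs [Hders [Hpdxs _]]]] Hs]]]].
    destruct (Hsub (S m) ltac:(lia) j) as [vtu [vxu [vxxu [[_ [Hcu [Hderu [Hpdxu _]]]] Hu]]]].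
    apply (v_compare d alpha (vu (S m) j) (vs (S m) j) vtu vts vxu vxs vxxu vxxs); auto; try lra.
    - intros t0 x0 Ht0 Hx0. exact (proj1 (Hu t0 Ht0) x0 Hx0).
    - intros t0 x0 Ht0 Hx0. exact (proj1 (Hs t0 Ht0) x0 Hx0).
    - intros t0 Ht0. destruct (Hu t0 Ht0) as [_ [_ [H1 _]]]. destruct (Hs t0 Ht0) as [_ [_ [H2 _]]].
      pose proof (Hrho j t0 Ht0).
      assert (beta * ru (S m) j t0 <= beta * rs (S m) j t0) by (apply Rmult_le_compat_l; lra). lra.
    - intros t0 Ht0. destruct (Hu t0 Ht0) as [_ [_ [_ H1]]]. destruct (Hs t0 Ht0) as [_ [_ [_ H2]]].
      pose proof (Hrho (j + 1)%Z t0 Ht0).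
      assert (beta * ru (S m) (j + 1)%Z t0 <= beta * rs (S m) (j + 1)%Z t0) by (apply Rmult_le_compat_l; lra). lra.
    - intros x0 Hx0. apply Hvn; auto. lia. }
  assert (Low : forall m j t, 0 < t -> forall x, 0 <= x <= 1 -> vu m j t x <= vs m j t x).
  { induction m as [|m IHm].
    - intros j t Ht x Hx. apply Hv0; auto; lra.
    - apply (Main m IHm). }
  intros n Hn j t Ht. destruct n as [|m]; [lia|].
  split.
  - apply (Low (S m) j t Ht).
  - apply (Main m (Low m)); auto.
Qed.
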